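(* Let $\Omega$ be a convex domain in $\mathbb{R}^n$, let $\tau$ be a smooth symmetric $(0,2)$-tensor field on $\Omega$, and let $x_0\neq y_0$ be points of $\Omega$. Let $e_1,\dots,e_n$ be an orthonormal frame of $\mathbb{R}^n$ with $e_n=N(x_0,y_0)$, and let $E_i=(e_i,e_i)\in\mathbb{R}^n\times\mathbb{R}^n$ for $i=1,\dots,n$. Then $$\nabla_{E_i}\nabla_{E_i}E_{\tau}(x_0,y_0)=E_{\nabla_{e_i}\nabla_{e_i}\tau}(x_0,y_0)$$ for $i=1,2,\dots,n$.
   Context: For $x,y\in\mathbb{R}^n$ let $r(x,y)=\|x-y\|$, and for $x\neq y$ let $N(x,y)=\frac{y-x}{\|y-x\|}$ and $\theta(s,x,y)=x+sN(x,y)$. For a symmetric $(0,2)$-tensor field $\tau$ on $\Omega$, $E_\tau(x,y)=\int_0^{r(x,y)}\tau(\theta(s,x,y))(N(x,y),N(x,y))\,ds$, viewed as a function of $(x,y)\in\Omega\times\Omega$; $\nabla_{V}$ for $V\in\mathbb{R}^n\times\mathbb{R}^n$ denotes the directional derivative of a function of $(x,y)$ in direction $V$ (so $\nabla_V\nabla_V$ is the second directional derivative). $\nabla_{e_i}\nabla_{e_i}\tau$ is the second (Euclidean) covariant derivative of $\tau$ in direction $e_i$, a symmetric $(0,2)$-tensor field. *)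

(* Defs.v *)
From HB Require Import structures.
From mathcomp Require Import all_boot all_order all_algebra.
From mathcomp Require Import all_classical all_reals all_analysis.
Set Implicit Arguments. Unset Strict Implicit. Unset Printing Implicit Defensive.
Import Order.TTheory GRing.Theory Num.Theory.
Import numFieldNormedType.Exports.
Local Open Scope classical_set_scope.
Local Open Scope ring_scope.

Section Defs.
Variables (R : realType) (n : nat).
Notation V := 'rV[R]_n.

Definition edot (v w : V) : R := \sum_(i < n) v 0 i * w 0 i.
Definition enorm (v : V) : R := Num.sqrt (edot v v).

Definition rdist (x y : V) : R := enorm (y - x).
Definition Ndir (x y : V) : V := (enorm (y - x))^-1 *: (y - x).
Definition theta (s : R) (x y : V) : V := x + s *: Ndir x y.

(* A (0,2)-tensor field is represented by its matrix field p |-> tau p;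
   tau(p)(v,w) = v * tau p * w^T. *)
Definition tens_eval (A : 'M[R]_n) (v w : V) : R := (v *m A *m w^T) 0 0.

Definition symmetric_field (O : set V) (tau : V -> 'M[R]_n) : Prop :=
  forall p, O p -> (tau p)^T = tau p.

Definition iterD (W : normedModType R) (vs : seq V) (f : V -> W) : V -> W :=
  foldr (fun v g => 'D_v g) f vs.

Definition smooth_on (W : normedModType R) (O : set V) (f : V -> W) : Prop :=
  forall vs : seq V, forall x, O x -> differentiable (iterD vs f) x.

Definition Etau (tau : V -> 'M[R]_n) (xy : V * V) : R :=
  Rintegral lebesgue_measure `[0, rdist xy.1 xy.2]
    (fun s => tens_eval (tau (theta s xy.1 xy.2)) (Ndir xy.1 xy.2) (Ndir xy.1 xy.2)).

(* second (Euclidean) covariant derivative nabla_e nabla_e tau *)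
Definition cov2 (tau : V -> 'M[R]_n) (e : V) : V -> 'M[R]_n :=
  'D_e ('D_e tau).

End Defs.

(* Main.v *)
Require Import Defs.
From HB Require Import structures.
From mathcomp Require Import all_boot all_order all_algebra.
From mathcomp Require Import all_classical all_reals all_analysis.
Import Order.TTheory GRing.Theory Num.Theory.
Import numFieldNormedType.Exports.
Local Open Scope classical_set_scope.
Local Open Scope ring_scope.
From mathcomp Require Import ring lra.


Section Lip.
Context {R : realType}.

Lemma lip_seg (f df : R -> R) (a b M : R) :
  (forall x, Num.min a b <= x <= Num.max a b -> is_derive x 1 f (df x) /\ `|df x| <= M) ->
  `|f b - f a| <= M * `|b - a|.
Proof.
wlog ab : a b / a <= b.
  move=> W H; case: (leP a b) => [ab|ba]; first exact: W.
  rewrite distrC (distrC b); apply: W; first exact: ltW.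
  by move=> x; rewrite minC maxC; exact: H.
move=> H.
rewrite (min_l ab) (max_r ab) in H.
have [c cab ->] : exists2 c, c \in `[a, b]%R & f b - f a = df c * (b - a).
  apply: MVT_segment => //.
  - by move=> x; rewrite in_itv /= => /andP[x1 x2]; apply: (H x _).1; rewrite !ltW.
  - apply: continuous_in_subspaceT => x; rewrite inE /= in_itv /= => xab.
    have [d _] := H x xab.
    by apply: differentiable_continuous; rewrite -derivable1_diffP.
rewrite normrM ler_wpM2r //.
have cab' : a <= c <= b by move: cab; rewrite in_itv.
by case: (H c cab').
Qed.

Lemma seg_in {a b x d : R} : `|a| < d -> `|b| < d ->
  Num.min a b <= x <= Num.max a b -> `|x| < d.
Proof.
rewrite !ltr_norml => /andP[a1 a2] /andP[b1 b2] /andP[x1 x2].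
apply/andP; split.
  by apply: lt_le_trans x1; rewrite lt_min a1 b1.
by apply: le_lt_trans x2 _; rewrite gt_max a2 b2.
Qed.

Lemma seg_dist (t h x : R) : Num.min t (t + h) <= x <= Num.max t (t + h) ->
  `|x - t| <= `|h|.
Proof.
case: (leP 0 h) => h0.
  rewrite min_l ?max_r ?lerDl // => /andP[x1 x2].
  rewrite ger0_norm ?subr_ge0 // ger0_norm //; by rewrite lerBlDl.
have hh : t + h <= t by rewrite gerDl ltW.
rewrite min_r ?max_l // => /andP[x1 x2].
rewrite ler0_norm ?subr_le0 // ltr0_norm // opprB lerBlDl addrC -lerBlDl opprK; done.
Qed.

Lemma taylor2 (H K K2 : R -> R) (t h M d : R) :
  (forall u : R, `|u| < d -> is_derive u 1 H (K u)) ->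
  (forall u : R, `|u| < d -> is_derive u 1 K (K2 u) /\ `|K2 u| <= M) ->
  `|t| < d -> `|t + h| < d ->
  `|H (t + h) - H t - h * K t| <= M * (`|h| * `|h|).
Proof.
move=> dH dK td thd.
pose g u := H u - K t * u.
have -> : H (t + h) - H t - h * K t = g (t + h) - g t.
  by rewrite /g; ring.
have -> : `|h| * `|h| = `|h| * `|(t + h) - t| by rewrite addrAC subrr add0r.
rewrite mulrA. apply: (@lip_seg g (fun u => K u - K t) t (t+h) (M * `|h|)) => x xs.
have xd := seg_in td thd xs.
split.
  rewrite /g; apply: is_deriveB; first exact: dH.
  apply: is_derive_eq; exact: mulr1.
apply: le_trans (@lip_seg K K2 t x M _) _.
  by move=> y ys; apply: dK; exact: seg_in td xd ys.
rewrite ler_wpM2l //; last exact: seg_dist.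
by have [_ ] := dK t td; apply: le_trans; exact: normr_ge0.
Qed.

Local Notation mu := (@lebesgue_measure R).

Lemma cint {r : R} {f : R -> R} : {within `[0, r], continuous f} ->
  mu.-integrable `[0, r] (EFin \o f).
Proof. move=> cf; apply: (@continuous_compact_integrable R) => //; exact: segment_compact. Qed.

Lemma leibniz (r d M : R) (H K K2 : R -> R -> R) (t : R) : 0 <= r ->
  (forall s u : R, 0 <= s <= r -> `|u| < d -> is_derive u 1 (H s) (K s u)) ->
  (forall s u : R, 0 <= s <= r -> `|u| < d -> is_derive u 1 (K s) (K2 s u) /\ `|K2 s u| <= M) ->
  (forall u : R, `|u| < d -> {within `[0, r], continuous (fun s => H s u)}) ->
  (forall u : R, `|u| < d -> {within `[0, r], continuous (fun s => K s u)}) ->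
  `|t| < d ->
  is_derive t 1 (fun u => \int[mu]_(s in `[0, r]) H s u) (\int[mu]_(s in `[0, r]) K s t).
Proof.
move=> r0 hH hK cH cK td.
set IK := \int[mu]_(s in `[0, r]) K s t.
pose C := fine (mu `[0, r]).
have C0 : 0 <= C by rewrite /C fine_ge0 // measure_ge0.
have M0 : 0 <= M.
  have := hK 0 t; rewrite lexx r0 /= => /(_ isT td) [_]; apply: le_trans.
  exact: normr_ge0.
have mI : measurable (`[0, r] : set R) by exact: measurable_itv.
have key : forall h, h != 0 -> `|t + h| < d ->
   `|IK - h^-1 *: ((\int[mu]_(s in `[0, r]) H s (h *: 1 + t)) - \int[mu]_(s in `[0, r]) H s t)|
    <= M * C * `|h|.
  move=> h h0 thd.
  rewrite -[h *: 1]/(h * 1) mulr1 (addrC h t).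
  have iH1 := cint (cH _ thd); have iH0 := cint (cH _ td); have iK := cint (cK _ td).
  pose D s := H s (t + h) - H s t - h * K s t.
  have cD : {within `[0, r], continuous D}.
    move=> x; rewrite /D.
    apply: (@continuousB _ _ (subspace `[0, r]) (fun s => H s (t + h) - H s t) (fun s => h * K s t)).
      apply: (@continuousB _ _ (subspace `[0, r]) (fun s => H s (t + h)) (fun s => H s t)).
        exact: cH.
      exact: cH.
    apply: (@continuousM _ (subspace `[0, r]) (cst h) (fun s => K s t)); first exact: cvg_cst.
    exact: cK.
  have iD := cint cD.
  have E : \int[mu]_(s in `[0, r]) H s (t + h) - \int[mu]_(s in `[0, r]) H s t
      = \int[mu]_(s in `[0, r]) D s + h * IK.
    have ihK : mu.-integrable `[0, r] (EFin \o (fun s => h * K s t)).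
      apply: cint => x.
      apply: (@continuousM _ (subspace `[0, r]) (cst h) (fun s => K s t)); first exact: cvg_cst.
      exact: cK.
    have iHH : mu.-integrable `[0, r] (EFin \o (fun s => H s (t + h) - H s t)).
      apply: cint => x.
      apply: (@continuousB _ _ (subspace `[0, r]) (fun s => H s (t + h)) (fun s => H s t)).
        exact: cH.
      exact: cH.
    rewrite /D (@RintegralB _ _ _ mu `[0, r] (fun s => H s (t + h) - H s t) (fun s => h * K s t)) //.
    rewrite (@RintegralB _ _ _ mu `[0, r] (fun s => H s (t + h)) (fun s => H s t)) //.
    rewrite RintegralZl //. rewrite -/IK. ring.
  rewrite E.
  have -> : IK - h^-1 *: (\int[mu]_(s in `[0, r]) D s + h * IK) = - (h^-1 * \int[mu]_(s in `[0, r]) D s).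
    rewrite -[h^-1 *: _]/(h^-1 * _) mulrDr mulrA mulVf // mul1r; ring.
  rewrite normrN normrM normfV.
  have B : `|\int[mu]_(s in `[0, r]) D s| <= M * (`|h| * `|h|) * C.
    apply: le_trans; first exact: le_normr_Rintegral.
    rewrite -Rintegral_cst //.
    apply: le_Rintegral => //.
    - apply: cint => x; apply: (continuous_comp (cD x)); exact: norm_continuous.
    - by apply: cint => x; exact: cvg_cst.
    move=> s; rewrite /= in_itv /= => /andP[s1 s2].
    have s0r : 0 <= s <= r by rewrite s1 s2.
    apply: (@taylor2 (H s) (K s) (K2 s) t h M d) => //.
      by move=> u ud; exact: hH.
    by move=> u ud; exact: hK.
  have hn0 : 0 < `|h| by rewrite normr_gt0.
  apply: le_trans (ler_wpM2l _ B) _; first by rewrite invr_ge0 ltW.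
  rewrite le_eqVlt; apply/orP; left; apply/eqP; field.
  by rewrite gt_eqF.
have Q : (fun h : R => h^-1 *: ((\int[mu]_(s in `[0, r]) H s (h *: 1 + t)) - \int[mu]_(s in `[0, r]) H s t)) @ 0^' --> IK.
  apply/cvgrPdist_le => e e0.
  have d0 : 0 < d - `|t| by rewrite subr_gt0.
  have MC0 : 0 < M * C + 1 by rewrite ltr_wpDl ?mulr_ge0.
  have ee : 0 < e / (M * C + 1) by rewrite divr_gt0.
  near=> h.
  apply: le_trans (key h _ _) _.
  - near: h; exact: nbhs_dnbhs_neq.
  - near: h; apply: filterS (dnbhs0_lt d0) => h hd.
    by rewrite (le_lt_trans (ler_normD _ _)) // -ltrBrDl.
  - have : `|h| <= e / (M * C + 1) by near: h; exact: dnbhs0_le ee.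
    rewrite ler_pdivlMr // => he; apply: le_trans he.
    rewrite mulrC ler_wpM2l //; lra.
apply: DeriveDef.
  by apply/cvg_ex; exists IK; exact: Q.
exact: cvg_lim Q.
Unshelve. all: by end_near. Qed.
End Lip.

Section Helpers.
Context {R : realType} {n : nat}.
Local Notation V := 'rV[R]_n.

Lemma tensE (A : 'M[R]_n) (a b : V) :
  tens_eval A a b = \sum_j (\sum_k a 0 k * A k j) * b 0 j.
Proof. by rewrite /tens_eval !mxE; apply: eq_bigr => j _; rewrite !mxE. Qed.

Lemma tens_lin (A B : 'M[R]_n) (h : R) (a b : V) :
  tens_eval (h *: (A - B)) a b = h * (tens_eval A a b - tens_eval B a b).
Proof. by rewrite /tens_eval -scalemxAr -scalemxAl mulmxBr mulmxBl !mxE. Qed.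

Lemma tens_cvg {T} (F : set_system T) (FF : Filter F) (f : T -> 'M[R]_n) (A : 'M[R]_n) (a b : V) :
  f @ F --> A -> (fun x => tens_eval (f x) a b) @ F --> tens_eval A a b.
Proof.
move=> fA; rewrite tensE; under eq_fun do rewrite tensE.
apply: (@cvg_big _ _ +%R 0 xpredT add_continuous) => j _.
apply: cvgM; last exact: cvg_cst.
apply: (@cvg_big _ _ +%R 0 xpredT add_continuous) => k _.
apply: cvgM; first exact: cvg_cst.
apply: (cvg_comp f (fun M : 'M[R]_n => M k j) fA). exact: coord_continuous.
Qed.

End Helpers.

Section Main.
Context {R : realType} {n : nat}.
Local Notation V := 'rV[R]_n.
Local Notation mu := (@lebesgue_measure R).

Lemma is_derive_L (M : V -> 'M[R]_n) (q w a b : V) : derivable M q w ->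
  is_derive q w (fun p => tens_eval (M p) a b) (tens_eval ('D_w M q) a b).
Proof.
move=> dM.
have E : (fun h : R => h^-1 *: (((fun p => tens_eval (M p) a b) \o shift q) (h *: w)
             - tens_eval (M q) a b))
       = (fun h => tens_eval (h^-1 *: ((M \o shift q) (h *: w) - M q)) a b).
  by apply/funext => h; rewrite tens_lin.
have C : (fun h : R => h^-1 *: (((fun p => tens_eval (M p) a b) \o shift q) (h *: w)
             - tens_eval (M q) a b)) @ 0^' --> tens_eval ('D_w M q) a b.
  by rewrite E; apply: tens_cvg; exact: dM.
apply: DeriveDef; first by apply/cvg_ex; eexists; exact: C.
exact: cvg_lim C.
Qed.

Lemma is_derive_line (G : V -> R) (p w : V) (t g : R) :
  is_derive (p + t *: w) w G g -> is_derive t 1 (fun u => G (p + u *: w)) g.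
Proof.
move=> [dG vG].
have E : (fun h : R => h^-1 *: (((fun u => G (p + u *: w)) \o shift t) (h *: 1)
           - G (p + t *: w)))
   = (fun h => h^-1 *: ((G \o shift (p + t *: w)) (h *: w) - G (p + t *: w))).
  apply/funext => h /=; congr (_ *: (G _ - _)).
  by rewrite -[h *: 1]/(h * 1) mulr1 scalerDl addrCA addrA.
apply: DeriveDef.
  by rewrite /derivable E.
by rewrite /derive E -vG.
Qed.


Section Geo.
Context (O : set V) (tau : V -> 'M[R]_n) (x0 y0 v : V).
Context (openO : open O) (convO : convex_set O) (smO : smooth_on O tau)
  (Ox0 : O x0) (Oy0 : O y0) (nxy : x0 != y0).

Let N := Ndir x0 y0.
Let r := rdist x0 y0.
Let c (s : R) : V := x0 + s *: N.
Let D (k : nat) := Defs.iterD (nseq k v) tau.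
Let Hk (k : nat) (s t : R) : R := tens_eval (D k (c s + t *: v)) N N.

Lemma r_gt0 : 0 < r.
Proof.
rewrite /r /rdist /enorm sqrtr_gt0 /edot lt_def.
rewrite sumr_ge0 ?andbT; last by move=> i _; rewrite -expr2 sqr_ge0.
apply/negP => /eqP /psumr_eq0P H.
have : y0 - x0 = 0.
  apply/rowP => j; rewrite [RHS]mxE.
  have := H (fun i _ => sqr_ge0 _) j isT.
  by rewrite -expr2 => /eqP; rewrite sqrf_eq0 => /eqP.
by move/eqP; rewrite subr_eq0 eq_sym (negbTE nxy).
Qed.


Lemma tube : exists2 d, 0 < d & forall s t, 0 <= s <= r -> `|t| <= d -> O (c s + t *: v).
Proof.
have := openO x0 Ox0; rewrite /interior => /nbhs_ballP [ex ex0 Bx].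
have := openO y0 Oy0; rewrite /interior => /nbhs_ballP [ey ey0 By].
set m := Num.min ex ey.
have m0 : 0 < m by rewrite lt_min ex0 ey0.
have v1 : 0 < `|v| + 1 by rewrite ltr_wpDl.
exists (m / (`|v| + 1)); first by rewrite divr_gt0.
move=> s t /andP[s0 sr] tle.
have tv : `|t *: v| < m.
  rewrite normrZ; apply: le_lt_trans (ler_wpM2r (normr_ge0 _) tle) _.
  by rewrite mulrAC ltr_pdivrMr // ltr_pM2l // ltrDl.
have Ox : O (x0 + t *: v).
  apply: Bx; rewrite -ball_normE /= opprD addrA subrr sub0r normrN.
  by apply: lt_le_trans tv _; rewrite ge_min lexx.
have Oy : O (y0 + t *: v).
  apply: By; rewrite -ball_normE /= opprD addrA subrr sub0r normrN.
  by apply: lt_le_trans tv _; rewrite ge_min lexx orbT.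
have r0 := r_gt0.
have p0 : 0 <= 1 - s / r by rewrite subr_ge0 ler_pdivrMr // mul1r.
have p1 : 1 - s / r <= 1 by rewrite gerBl divr_ge0 // ltW.
have := convO _ _ (Itv01 p0 p1) (mem_set Ox) (mem_set Oy).
rewrite inE.
match goal with |- O ?z -> _ =>
  have -> : z = (1 - s / r) *: (x0 + t *: v) + (1 - (1 - s / r)) *: (y0 + t *: v) by [] end.
suff -> : (1 - s / r) *: (x0 + t *: v) + (1 - (1 - s / r)) *: (y0 + t *: v) = c s + t *: v by [].
apply/rowP => j; rewrite /c /N /Ndir /r /rdist !mxE; ring.
Qed.


Lemma dHk k s t : O (c s + t *: v) -> is_derive t 1 (Hk k s) (Hk k.+1 s t).
Proof.
move=> Oq.
have dif : differentiable (D k) (c s + t *: v) := smO (nseq k v) _ Oq.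
have := @is_derive_L (D k) _ v N N (@diff_derivable _ _ _ _ _ v dif).
exact: (@is_derive_line (fun p => tens_eval (D k p) N N) (c s) v t).
Qed.

Lemma jcont {X : topologicalType} k (S T : X -> R) (x : X) :
  {for x, continuous S} -> {for x, continuous T} -> O (c (S x) + T x *: v) ->
  {for x, continuous (fun y => Hk k (S y) (T y))}.
Proof.
move=> cS cT Oq.
have dif : differentiable (D k) (c (S x) + T x *: v) := smO (nseq k v) _ Oq.
apply: (@tens_cvg _ _ _ _ _ (fun y => D k (c (S y) + T y *: v))).
apply: (cvg_comp (fun y => c (S y) + T y *: v) (D k)); last first.
  exact: differentiable_continuous.
apply: cvgD; last exact: cvgZr_tmp.
apply: cvgD; first exact: cvg_cst.
exact: cvgZr_tmp.
Qed.

Lemma bndHk k d : (forall s t, 0 <= s <= r -> `|t| <= d -> O (c s + t *: v)) ->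
  exists M, forall s t, 0 <= s <= r -> `|t| <= d -> `|Hk k s t| <= M.
Proof.
move=> tb.
pose A : set (R * R) := `[0, r] `*` `[- d, d].
have cA : compact A by apply: compact_setX; exact: segment_compact.
have inA p : A p -> 0 <= p.1 <= r /\ `|p.2| <= d.
  by case: p => a b [/=]; rewrite !in_itv /= => -> ; rewrite ler_norml.
have cf : {within A, continuous (fun p => Hk k p.1 p.2)}.
  apply: continuous_in_subspaceT => p; rewrite inE => /inA [p1 p2].
  apply: jcont.
  - exact: cvg_fst.
  - exact: cvg_snd.
  exact: tb.
have /compact_bounded [M0 [_ mrt]] := continuous_compact cf cA.
exists (M0 + 1) => s t s0 td.
apply: (mrt (M0 + 1) _ (Hk k s t)); first by rewrite ltrDl.
exists (s, t) => //; split; rewrite /= in_itv /=; first exact: s0.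
by rewrite -ler_norml.
Qed.


Lemma Etau_line (tau' : V -> 'M[R]_n) (u : R) :
  Etau tau' (u *: (v, v) + (x0, y0)) =
  \int[mu]_(s in `[0, r]) tens_eval (tau' (c s + u *: v)) N N.
Proof.
have E : (u *: v + y0) - (u *: v + x0) = y0 - x0.
  by rewrite opprD addrACA subrr add0r.
rewrite /Etau /= /rdist /theta /Ndir E -/(Ndir x0 y0) -/N.
rewrite -/(rdist x0 y0) -/r.
apply: eq_Rintegral => s _; congr (tens_eval (tau' _) _ _).
by rewrite /c [RHS]addrC addrA.
Qed.

Lemma leib_k k d M : (forall s t, 0 <= s <= r -> `|t| <= d -> O (c s + t *: v)) ->
  (forall s t, 0 <= s <= r -> `|t| <= d -> `|Hk k.+2 s t| <= M) ->
  forall t : R, `|t| < d ->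
  is_derive t 1 (fun u => \int[mu]_(s in `[0, r]) Hk k s u)
                (\int[mu]_(s in `[0, r]) Hk k.+1 s t).
Proof.
move=> tb bM t td.
have r0 := ltW r_gt0.
apply: (@leibniz _ r d M (Hk k) (Hk k.+1) (Hk k.+2)) => //.
- by move=> s u s01 ud; apply: dHk; apply: tb => //; exact: ltW.
- move=> s u s01 ud; split; last by apply: bM => //; exact: ltW.
  by apply: dHk; apply: tb => //; exact: ltW.
- move=> u ud; apply: continuous_in_subspaceT => s; rewrite inE /= in_itv /= => s01.
  apply: (@jcont R k id (cst u)); [exact: cvg_id | exact: cvg_cst |].
  by apply: tb => //; exact: ltW.
- move=> u ud; apply: continuous_in_subspaceT => s; rewrite inE /= in_itv /= => s01.
  apply: (@jcont R k.+1 id (cst u)); [exact: cvg_id | exact: cvg_cst |].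
  by apply: tb => //; exact: ltW.
Qed.


Lemma main_res :
  derivable ('D_(v, v) (Etau tau)) (x0, y0) (v, v) /\
  'D_(v, v) ('D_(v, v) (Etau tau)) (x0, y0) = Etau (cov2 tau v) (x0, y0).
Proof.
have [d d0 tb] := tube.
have [M2 bM2] := bndHk 2 d tb.
have [M3 bM3] := bndHk 3 d tb.
pose Ei : V * V := (v, v).
pose z : V * V := (x0, y0).
pose U k u := \int[mu]_(s in `[0, r]) Hk k s u.
have S1 : forall u : R, `|u| < d -> 'D_Ei (Etau tau) (u *: Ei + z) = U 1%N u.
  move=> u ud.
  have L0 := leib_k 0 d M2 tb bM2 u ud.
  rewrite /U -(@derive_val _ _ _ _ _ _ _ L0) /derive.
  congr lim; apply: (congr1 (fun f => fmap f _)); apply/funext => h /=.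
  rewrite -[h *: 1]/(h * 1) mulr1.
  have -> : h *: Ei + (u *: Ei + z) = (h + u) *: Ei + z by rewrite scalerDl addrA.
  by rewrite !Etau_line.
have L1 : is_derive (0:R) 1 (U 1%N) (U 2%N 0).
  by apply: (leib_k 1 d M3 tb bM3); rewrite normr0.
have cW : (fun h : R => h^-1 *: ((U 1%N \o shift 0) (h *: 1) - U 1%N 0)) @ 0^' --> U 2%N 0.
  have [dW vW] := L1.
  by rewrite -vW; exact: dW.
have Q : (fun h : R => h^-1 *: (('D_Ei (Etau tau) \o shift z) (h *: Ei) - 'D_Ei (Etau tau) z))
    @ 0^' --> U 2%N 0.
  apply: cvg_trans cW; apply: near_eq_cvg.
  near=> h => /=.
  have hd : `|h| < d by near: h; exact: dnbhs0_lt.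
  rewrite -[h *: 1]/(h * 1) mulr1 addr0 S1 //.
  have -> : z = 0 *: Ei + z by rewrite scale0r add0r.
  by rewrite S1 ?normr0 // scale0r add0r.
have -> : Etau (cov2 tau v) (x0, y0) = U 2%N 0.
  have -> : (x0, y0) = 0 *: Ei + z by rewrite scale0r add0r.
  by rewrite Etau_line.
split.
  by apply/cvg_ex; eexists; exact: Q.
exact: cvg_lim Q.
Unshelve. all: by end_near. Qed.

End Geo.
End Main.

Theorem theorem2p4 (R : realType) (n : nat) (O : set 'rV[R]_n)
  (tau : 'rV[R]_n -> 'M[R]_n) (x0 y0 : 'rV[R]_n) (e : 'I_n -> 'rV[R]_n) :
  open O -> convex_set O ->
  smooth_on O tau -> symmetric_field O tau ->
  O x0 -> O y0 -> x0 != y0 ->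
  (forall i j : 'I_n, edot (e i) (e j) = (i == j)%:R) ->
  (forall i : 'I_n, nat_of_ord i = n.-1 -> e i = Ndir x0 y0) ->
  forall i : 'I_n,
    let Ei : 'rV[R]_n * 'rV[R]_n := (e i, e i) in
    derivable ('D_Ei (Etau tau)) (x0, y0) Ei /\
    'D_Ei ('D_Ei (Etau tau)) (x0, y0) = Etau (cov2 tau (e i)) (x0, y0).
Proof.
move=> oO cO sO _ Ox Oy nxy _ _ i Ei.
rewrite /Ei. exact: (@main_res R n O tau x0 y0 (e i) oO cO sO Ox Oy nxy).
Qed.
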